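(* For every natural number $n\geq 2$, the $n$-Split Interval $S_n(I)$ is a Rosenthal compactum which is premetric of degree at most $n$ but is not premetric of degree at most $n-1$.
   Context: A Rosenthal compactum is a topological space homeomorphic to a compact subset of $\mathcal{B}_1(\mathbb{N}^{\mathbb{N}})$, the space of first Baire class real functions on $\mathbb{N}^{\mathbb{N}}$ with the pointwise topology. A compact space $K$ is premetric of degree at most $m$ if there is a continuous surjection $f:K\to M$ onto a metrizable compact space $M$ with $|f^{-1}(x)|\leq m$ for all $x\in M$. Let $I=[0,1]$. For $n\geq 2$, $S_n(I)$ is the set $I\times\{0,\ldots,n-1\}$ with the topology in which the points $(x,i)$ with $i\in\{2,\ldots,n-1\}$ are isolated, a point $(x,0)$ with $x>0$ has basic neighbourhoods $\{(x,0)\}\cup\{(y,i): z_0<y<x,\ i\in\{0,\ldots,n-1\}\}$ for $z_0\in I$, $z_0<x$, a point $(x,1)$ with $x<1$ has basic neighbourhoods $\{(x,1)\}\cup\{(y,i): x<y<z_1,\ i\in\{0,\ldots,n-1\}\}$ for $z_1\in I$, $z_1>x$, and the points $(0,0)$ and $(1,1)$ are isolated. *)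

(* Defs.v *)
From HB Require Import structures.
From mathcomp Require Import all_boot all_order all_algebra.
From mathcomp Require Import all_classical all_reals all_analysis.
Set Implicit Arguments. Unset Strict Implicit. Unset Printing Implicit Defensive.
Import Order.TTheory GRing.Theory Num.Theory.
Import numFieldTopology.Exports numFieldNormedType.Exports.
Local Open Scope classical_set_scope.
Local Open Scope ring_scope.

Definition unit_itv (R : realType) := {x : R | 0 <= x <= 1}.

Definition Sn (R : realType) (n : nat) : Type := (unit_itv R * 'I_n)%type.
HB.instance Definition _ (R : realType) (n : nat) := Choice.on (Sn R n).

Section SplitInterval.
Variables (R : realType) (n : nat).

Definition sn_basic (p : Sn R n) (B : set (Sn R n)) : Prop :=
  let x := val p.1 in
  let i := nat_of_ord p.2 in
  if (1 < i)%N then B = [set p]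
  else if i == 0%N then
    (x = 0 /\ B = [set p]) \/
    (exists z : R, 0 <= z < x /\
       B = [set p] `|` [set q : Sn R n | z < val q.1 < x])
  else
    (x = 1 /\ B = [set p]) \/
    (exists z : R, x < z <= 1 /\
       B = [set p] `|` [set q : Sn R n | x < val q.1 < z]).

Definition sn_open (U : set (Sn R n)) : Prop :=
  forall p, U p -> exists B, sn_basic p B /\ B `<=` U.

Lemma sn_basic_mem p B : sn_basic p B -> B p.
Proof.
rewrite /sn_basic; case: ifP => _; first by move=> ->.
case: ifP => _ [[_ ->]|[z [_ ->]]] //; by left.
Qed.

Lemma sn_openT : sn_open setT.
Proof.
move=> p _; have /andP[x0 x1] := valP p.1.
have [Hi|Hi] := boolP (1 < p.2)%N.
  by exists [set p]; rewrite /sn_basic /= Hi.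
have [Hi0|Hi0] := boolP (nat_of_ord p.2 == 0%N).
  have [xe|xn0] := eqVneq (val p.1) 0.
    by exists [set p]; rewrite /sn_basic /= (negbTE Hi) Hi0; split=> //; left.
  exists ([set p] `|` [set q | 0 < val q.1 < val p.1]).
  rewrite /sn_basic /= (negbTE Hi) Hi0; split=> //; right; exists 0; split=> //.
  by rewrite lexx /= lt_neqAle eq_sym xn0 x0.
have [xe|xn1] := eqVneq (val p.1) 1.
  by exists [set p]; rewrite /sn_basic /= (negbTE Hi) (negbTE Hi0); split=> //; left.
exists ([set p] `|` [set q | val p.1 < val q.1 < 1]).
rewrite /sn_basic /= (negbTE Hi) (negbTE Hi0); split=> //; right; exists 1.
by split=> //; rewrite lexx andbT lt_neqAle xn1 x1.
Qed.

Lemma sn_openI : setI_closed sn_open.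
Proof.
move=> U V oU oV p [Up Vp].
have [B1 [b1 s1]] := oU p Up; have [B2 [b2 s2]] := oV p Vp.
have m1 := sn_basic_mem b1; have m2 := sn_basic_mem b2.
have Hp : forall B, sn_basic p B -> B `<=` B1 /\ B `<=` B2 ->
  exists B, sn_basic p B /\ B `<=` U `&` V.
  move=> B bB [h1 h2]; exists B; split=> // q Bq; split.
  - exact/s1/h1.
  - exact/s2/h2.
have [Hi|Hi] := boolP (1 < p.2)%N.
  move: b1 b2; rewrite [sn_basic p B1]/sn_basic [sn_basic p B2]/sn_basic Hi => e1 e2; subst B1 B2.
  by apply: (Hp [set p]); [rewrite /sn_basic /= Hi|split].
have [Hi0|Hi0] := boolP (nat_of_ord p.2 == 0%N).
  move: b1 b2; rewrite [sn_basic p B1]/sn_basic [sn_basic p B2]/sn_basic (negbTE Hi) Hi0.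
  move=> [[x0 e1]|[z1 [/andP[z10 z1x] e1]]].
    move=> _; apply: (Hp [set p]).
      by rewrite /sn_basic /= (negbTE Hi) Hi0; left.
    by subst B1; split=> q ->.
  move=> [[x0 e2]|[z2 [/andP[z20 z2x] e2]]].
    apply: (Hp [set p]); first by rewrite /sn_basic /= (negbTE Hi) Hi0; left.
    by subst B2; split=> q ->.
  apply: (Hp ([set p] `|` [set q | Num.max z1 z2 < val q.1 < val p.1])).
    rewrite /sn_basic /= (negbTE Hi) Hi0; right; exists (Num.max z1 z2).
    by rewrite gt_max z1x z2x le_max z10.
  subst B1 B2; split=> q [->|/andP[]]; rewrite ?gt_max;
    try (by left); by move=> /andP[a b] c; right; rewrite /= ?a ?b c.
move: b1 b2; rewrite [sn_basic p B1]/sn_basic [sn_basic p B2]/sn_basic (negbTE Hi) (negbTE Hi0).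
move=> [[x1 e1]|[z1 [/andP[z1x z11] e1]]].
  move=> _; apply: (Hp [set p]).
    by rewrite /sn_basic /= (negbTE Hi) (negbTE Hi0); left.
  by subst B1; split=> q ->.
move=> [[x1 e2]|[z2 [/andP[z2x z21] e2]]].
  apply: (Hp [set p]); first by rewrite /sn_basic /= (negbTE Hi) (negbTE Hi0); left.
  by subst B2; split=> q ->.
apply: (Hp ([set p] `|` [set q | val p.1 < val q.1 < Num.min z1 z2])).
  rewrite /sn_basic /= (negbTE Hi) (negbTE Hi0); right; exists (Num.min z1 z2).
  by rewrite lt_min z1x z2x ge_min z11.
subst B1 B2; split=> q [->|/andP[]]; rewrite ?lt_min;
  try (by left); by move=> c /andP[a b]; right; rewrite /= ?a ?b c.
Qed.

Lemma sn_open_bigU (I : Type) (f : I -> set (Sn R n)) :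
  (forall i, sn_open (f i)) -> sn_open (\bigcup_i f i).
Proof.
move=> hf p [i _ fip]; have [B [bB sB]] := hf i p fip.
by exists B; split=> // q /sB fiq; exists i.
Qed.

End SplitInterval.

HB.instance Definition _ (R : realType) (n : nat) :=
  isOpenTopological.Build (Sn R n) (@sn_openT R n) (@sn_openI R n)
    (@sn_open_bigU R n).

Definition baire_space : Type := prod_topology (fun _ : nat => nat).
HB.instance Definition _ := Pointed.on baire_space.
HB.instance Definition _ := Nbhs.on baire_space.
HB.instance Definition _ := Topological.on baire_space.

Definition ptws_fun (R : realType) : Type :=
  prod_topology (fun _ : baire_space => (R : topologicalType)).
HB.instance Definition _ (R : realType) := Nbhs.on (ptws_fun R).
HB.instance Definition _ (R : realType) := Topological.on (ptws_fun R).

Definition baire_one (R : realType) : set (ptws_fun R) :=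
  [set f | exists g : nat -> baire_space -> R,
      (forall k, continuous (g k)) /\
      (forall x : baire_space, (fun k => g k x) @ \oo --> f x)].

Arguments baire_one R : clear implicits.

Definition rosenthal_compactum (R : realType) (K : topologicalType) : Prop :=
  exists (e : K -> ptws_fun R) (e' : ptws_fun R -> K),
    [/\ continuous e, (forall x, e' (e x) = x),
        {within range e, continuous e'},
        compact (range e) & range e `<=` baire_one R].

Definition premetric_deg_le (R : realType) (K : topologicalType) (m : nat)
  : Prop :=
  exists (M : pseudoMetricType R) (f : K -> M),
    [/\ hausdorff_space M, compact [set: M], continuous f,
        (forall y : M, exists x, f x = y) &
        (forall y : M, (f @^-1` [set y] #<= [set: 'I_m])%card)].

(* Main.v *)
Require Import Defs.
From HB Require Import structures.
From mathcomp Require Import all_boot all_order all_algebra.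
From mathcomp Require Import all_classical all_reals all_analysis.
From mathcomp Require Import finmap ring lra.
Set Implicit Arguments. Unset Strict Implicit. Unset Printing Implicit Defensive.
Import Order.TTheory GRing.Theory Num.Theory.
Import numFieldTopology.Exports numFieldNormedType.Exports.
Local Open Scope classical_set_scope.
Local Open Scope ring_scope.

Section S.
Variables (R : realType) (n : nat).
Local Notation S := (Sn R n).

Lemma sn_openE (U : set S) : open U = sn_open U.
Proof. by []. Qed.

Lemma basic_open (p : S) B : sn_basic p B -> open B.
Proof.

move=> bB; rewrite sn_openE /sn_open; move: bB; rewrite {1}/sn_basic.
have /andP[x0 x1] := valP p.1.
case: ifP => Hi; first by move=> -> q ->; exists [set p]; rewrite /sn_basic Hi; split.
case: ifP => Hi0.
  case=> [[px ->] q ->|[z [/andP[z0 zx] ->]] q [->|/andP[zq qx]]].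
  - by exists [set p]; split=> //; rewrite /sn_basic Hi Hi0; left.
  - by exists ([set p] `|` [set q | z < val q.1 < val p.1]); split=> //;
      rewrite /sn_basic Hi Hi0; right; exists z; rewrite z0 zx.
  - have /andP[q0 q1] := valP q.1.
    have [Hj|Hj] := boolP (1 < q.2)%N.
      by exists [set q]; rewrite /sn_basic Hj; split=> // r ->; right; rewrite /= zq qx.
    have [Hj0|Hj0] := boolP (nat_of_ord q.2 == 0%N).
      exists ([set q] `|` [set r | z < val r.1 < val q.1]); split.
        rewrite /sn_basic (negbTE Hj) Hj0; right; exists z; rewrite z0 zq //.
      move=> r [->|/andP[zr rq]]; right; first by rewrite /= zq qx.
      by rewrite /= zr (lt_trans rq qx).
    exists ([set q] `|` [set r | val q.1 < val r.1 < val p.1]); split.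
      rewrite /sn_basic (negbTE Hj) (negbTE Hj0); right; exists (val p.1).
      by rewrite qx x1.
    move=> r [->|/andP[qr rx]]; right; first by rewrite /= zq qx.
    by rewrite /= rx (lt_trans zq qr).
case=> [[px ->] q ->|[z [/andP[xz z1] ->]] q [->|/andP[xq qz]]].
- by exists [set p]; split=> //; rewrite /sn_basic Hi Hi0; left.
- by exists ([set p] `|` [set q | val p.1 < val q.1 < z]); split=> //;
    rewrite /sn_basic Hi Hi0; right; exists z; rewrite z1 xz.
- have /andP[q0 q1] := valP q.1.
  have [Hj|Hj] := boolP (1 < q.2)%N.
    by exists [set q]; rewrite /sn_basic Hj; split=> // r ->; right; rewrite /= xq qz.
  have [Hj0|Hj0] := boolP (nat_of_ord q.2 == 0%N).
    exists ([set q] `|` [set r | val p.1 < val r.1 < val q.1]); split.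
      rewrite /sn_basic (negbTE Hj) Hj0; right; exists (val p.1); rewrite xq x0 //.
    move=> r [->|/andP[zr rq]]; right; first by rewrite /= xq qz.
    by rewrite /= zr (lt_trans rq qz).
  exists ([set q] `|` [set r | val q.1 < val r.1 < z]); split.
    rewrite /sn_basic (negbTE Hj) (negbTE Hj0); right; exists z.
    by rewrite qz z1.
  move=> r [->|/andP[qr rx]]; right; first by rewrite /= xq qz.
  by rewrite /= rx (lt_trans xq qr).
Qed.

Lemma basic_nbhs (p : S) B : sn_basic p B -> nbhs p B.
Proof.
move=> bB; rewrite nbhsE; exists B => //; split; first exact: basic_open bB.
exact: sn_basic_mem bB.
Qed.

Lemma nbhs_basic (p : S) A : nbhs p A -> exists B, sn_basic p B /\ B `<=` A.
Proof.
rewrite nbhsE => -[U [oU Up] UA].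
have [B [bB BU]] := oU p Up; exists B; split=> //; exact: subset_trans BU UA.
Qed.

Lemma loc_const_cont (T : topologicalType) (g : S -> T) :
  (forall p, exists B, sn_basic p B /\ forall q, B q -> g q = g p) ->
  continuous g.
Proof.
move=> h p V /= gV; have [B [bB Bc]] := h p.
apply: filterS (basic_nbhs bB) => q /Bc e; rewrite /= e; exact: nbhs_singleton.
Qed.


Section Compact.
Variables (I : choiceType) (D : set I) (f : I -> set S).
Hypothesis fop : forall i, D i -> open (f i).
Hypothesis fcov : [set: S] `<=` cover D f.

Let cov (A : set S) := finite_subset_cover D f A.

Let covU A B : cov A -> cov B -> cov (A `|` B).
Proof.
move=> [D1 s1 c1] [D2 s2 c2]; exists (D1 `|` D2)%fset.
  by move=> j; rewrite inE => /orP[/s1|/s2].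
by move=> q [/c1|/c2] [j /= jD fq]; exists j => //=; rewrite inE ?jD //= orbT.
Qed.

Let covS A B : A `<=` B -> cov B -> cov A.
Proof. by move=> AB [D1 s1 c1]; exists D1 => //; exact: subset_trans c1. Qed.

Let cov1 p : cov [set p].
Proof.
have [j Dj fj] : cover D f p := fcov Logic.I.
exists [fset j]%fset; first by move=> k; rewrite inE => /eqP ->; apply/mem_set.
by move=> q ->; exists j => //=; rewrite inE.
Qed.

Let covj j : D j -> cov (f j).
Proof.
move=> Dj; exists [fset j]%fset; first by move=> k; rewrite inE => /eqP ->; apply/mem_set.
by move=> q fq; exists j => //=; rewrite inE.
Qed.

Let cov_sub A : (forall a b, A a -> A b -> a = b) -> cov A.
Proof.
move=> h; have [[a Aa]|/set0P/negP/negPn/eqP A0] := pselect (A !=set0).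
  by apply: (covS _ (cov1 a)) => b Ab; exact: h.
by exists fset0%fset => //; rewrite A0.
Qed.

Let cov_fiber c : cov [set q : S | val q.1 = c].
Proof.
suff h m : cov [set q : S | val q.1 = c /\ (q.2 < m)%N].
  by apply: covS (h n) => q qc; split=> //.
elim: m => [|m IH].
  by apply: cov_sub => a b [_]; rewrite ltn0.
apply: (covS _ (covU IH (cov_sub (A := [set q : S | val q.1 = c /\ nat_of_ord q.2 = m]) _))).
  by move=> q [qc]; rewrite ltnS leq_eqVlt => /orP[/eqP|]; [right|left].
move=> [a1 a2] [b1 b2] /= [ac a2m] [bc b2m]; congr pair.
  by apply: val_inj => /=; rewrite ac bc.
by apply: val_inj; rewrite /= a2m b2m.
Qed.

Hypothesis hn : (1 < n)%N.

Lemma Sn_cover : cov [set: S].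
Proof.
pose L (s : R) := [set q : S | val q.1 < s \/ (val q.1 = s /\ nat_of_ord q.2 != 1%N)].
pose D0 := [set s : R | 0 <= s <= 1 /\ cov (L s)].
have L0 : cov (L 0).
  apply: covS (cov_fiber 0) => q [q0|[]//].
  by have /andP[+ _] := valP q.1; rewrite leNgt q0.
have D00 : D0 0 by split=> //; rewrite lexx ler01.
have hs : has_sup D0 by split; [exists 0|exists 1 => s [/andP[_ ?] _]].
set c := sup D0.
have c0 : 0 <= c := sup_upper_bound hs D00.
have c1 : c <= 1 by apply: ge_sup; [exists 0|move=> s [/andP[_ ?] _]].
have hc : 0 <= c <= 1 by rewrite c0 c1.
have covLc : cov (L c).
  have [->//|cn0] := eqVneq c 0.
  have cpos : 0 < c by rewrite lt_neqAle eq_sym cn0 c0.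
  pose i0 : 'I_n := Ordinal (ltn_trans (ltn0Sn 0) hn).
  pose pc : S := (exist _ c hc, i0).
  have [j Dj fjp] : cover D f pc := fcov Logic.I.
  have := fop Dj; rewrite sn_openE => /(_ pc fjp) [B [+ Bsub]].
  rewrite /sn_basic /= => -[[/= ce _]|[z [/andP[z0 zc] Be]]].
    by move: cn0; rewrite ce eqxx.
  have [s Ds zs] := sup_adherent (eps := c - z) (ltac:(by rewrite subr_gt0)) hs.
  have zs' : z < s by move: zs; rewrite -/c; lra.
  have sc : s <= c := sup_upper_bound hs Ds.
  apply: covS (covU (covU Ds.2 (covj Dj)) (covU (cov_fiber s) (cov_fiber c))).
  move=> q [qc|[qc _]]; last by right; right.
  case: (ltgtP (val q.1) s) => qs.
  - by left; left; left.
  - by left; right; apply: Bsub; rewrite Be; right; rewrite /= qc (lt_trans zs' qs).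
  - by right; left.
have c1' : c = 1.
  apply/eqP; rewrite eq_le c1 /=; rewrite leNgt; apply/negP => clt.
  pose i1 : 'I_n := Ordinal hn.
  pose pc : S := (exist _ c hc, i1).
  have [j Dj fjp] : cover D f pc := fcov Logic.I.
  have := fop Dj; rewrite sn_openE => /(_ pc fjp) [B [+ Bsub]].
  rewrite /sn_basic /= => -[[/= ce _]|[z [/andP[cz z1] Be]]].
    by move: clt; rewrite ce ltxx.
  pose s := (c + z) / 2.
  have Ds : D0 s.
    split; first by apply/andP; split; rewrite /s; lra.
    apply: covS (covU (covU covLc (covj Dj)) (covU (cov_fiber c) (cov_fiber s))).
    move=> q [qs|[qs _]]; last by right; right.
    case: (ltgtP (val q.1) c) => qc.
    - by left; left; left.
    - left; right; apply: Bsub; rewrite Be; right; rewrite /= qc /=.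
      by apply: (lt_trans qs); rewrite /s; lra.
    - by right; left.
  have := sup_upper_bound hs Ds; rewrite -/c /s; lra.
apply: covS (covU covLc (cov_fiber 1)) => q _.
have /andP[_ q1] := valP q.1.
case: (ltgtP (val q.1) 1) => qc.
- by left; left; rewrite c1'.
- by move: q1; rewrite leNgt qc.
- by right.
Qed.

End Compact.

End S.

Definition SnP (R : realType) (n : nat) (p0 : Sn R n) := Sn R n.
HB.instance Definition _ (R : realType) (n : nat) (p0 : Sn R n) :=
  Topological.on (SnP p0).
HB.instance Definition _ (R : realType) (n : nat) (p0 : Sn R n) :=
  isPointed.Build (SnP p0) p0.

Lemma Sn_compact (R : realType) (n : nat) : (1 < n)%N -> compact [set: Sn R n].
Proof.
move=> hn.
have h01 : 0 <= (0:R) <= 1 by rewrite lexx ler01.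
pose p0 : Sn R n := (exist _ (0:R) h01, Ordinal hn).
have : compact [set: SnP p0].
  rewrite (@compact_cover (SnP p0)) => I D f fop fcov.
  exact: (@Sn_cover R n I D f fop fcov hn).
by [].
Qed.


Definition UI (R : realType) := initial_topology (fun x : unit_itv R => val x).

Section UIsec.
Variable R : realType.

Lemma UI_hausdorff : hausdorff_space (UI R).
Proof.
rewrite ball_hausdorff => a b ab.
have vab : val a != val b by apply: contra ab => /eqP/val_inj ->.
have d0 : 0 < `|val a - val b| / 2 by rewrite divr_gt0 // normr_gt0 subr_eq0.
exists (PosNum d0, PosNum d0); apply/eqP; rewrite -subset0 => y [].
rewrite /ball /= /initial_ball -!ball_normE /ball_ /=.
move=> h1 h2; have := ler_normD (val a - val y) (val y - val b).
rewrite (_ : val a - val y + (val y - val b) = val a - val b); last by ring.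
rewrite distrC in h2; lra.
Qed.

Lemma UI_compact : compact [set: UI R].
Proof.
have h01 : 0 <= (0:R) <= 1 by rewrite lexx ler01.
pose p0 : unit_itv R := exist _ 0 h01.
pose g (x : R) : UI R := insubd p0 x.
have -> : [set: UI R] = g @` `[0, 1]%classic.
  apply/seteqP; split=> // y _; exists (val y).
    by rewrite /= in_itv /=; exact: (valP y).
  by rewrite /g valKd.
apply: continuous_compact; last exact: segment_compact.
suff h : continuous ((fun x : unit_itv R => val x) \o (from_subspace `[0, 1]%classic g)).
  exact: (continuous_comp_initial h).
apply: (@subspace_eq_continuous _ _ _ incl_subspace).
  by move=> x /set_mem; rewrite /= in_itv /= => hx; rewrite /g /= insubdK.
exact: incl_subspace_continuous.
Qed.

End UIsec.

Section Prem.
Variables (R : realType) (n : nat).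
Hypothesis hn : (1 < n)%N.
Local Notation S := (Sn R n).

Lemma proj_cont : continuous (fun p : S => (p.1 : UI R)).
Proof.
suff h : continuous ((fun x : unit_itv R => val x) \o (fun p : S => (p.1 : UI R))).
  exact: (@continuous_comp_initial _ S R (fun x : unit_itv R => val x) (fun p : S => (p.1 : UI R)) h).
move=> p V /= /nbhs_ballP [e e0 eV].
suff [B [bB Bs]] : exists B, sn_basic p B /\ forall q, B q -> `|val p.1 - val q.1| < e.
  apply: filterS (basic_nbhs bB) => q /Bs qe; apply: eV.
  by rewrite -ball_normE /ball_ /=.
have e0' : 0 < e := e0.
have /andP[x0 x1] := valP p.1.
have [Hi|Hi] := boolP (1 < p.2)%N.
  by exists [set p]; rewrite /sn_basic Hi; split => // q ->; rewrite subrr normr0.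
have [Hi0|Hi0] := boolP (nat_of_ord p.2 == 0%N).
  have [xe|xn] := eqVneq (val p.1) 0.
    exists [set p]; rewrite /sn_basic (negbTE Hi) Hi0.
    by split; [left|move=> q ->; rewrite subrr normr0].
  have xp : 0 < val p.1 by rewrite lt_neqAle eq_sym xn x0.
  exists ([set p] `|` [set q | Num.max 0 (val p.1 - e) < val q.1 < val p.1]).
  rewrite /sn_basic (negbTE Hi) Hi0; split.
    right; exists (Num.max 0 (val p.1 - e)); split=> //.
    by rewrite le_max lexx /= gt_max xp /=; lra.
  move=> q [->|/andP[]]; first by rewrite subrr normr0.
  rewrite gt_max => /andP[_ h1] h2; rewrite ger0_norm; lra.
have [xe|xn] := eqVneq (val p.1) 1.
  exists [set p]; rewrite /sn_basic (negbTE Hi) (negbTE Hi0).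
  by split; [left|move=> q ->; rewrite subrr normr0].
have xp : val p.1 < 1 by rewrite lt_neqAle xn x1.
exists ([set p] `|` [set q | val p.1 < val q.1 < Num.min 1 (val p.1 + e)]).
rewrite /sn_basic (negbTE Hi) (negbTE Hi0); split.
  right; exists (Num.min 1 (val p.1 + e)); split=> //.
  by rewrite ge_min lt_min xp lexx /= andbT; lra.
move=> q [->|/andP[]]; first by rewrite subrr normr0.
move=> h1; rewrite lt_min => /andP[_ h2]; rewrite ler0_norm; lra.
Qed.

Lemma prem_n : premetric_deg_le R S n.
Proof.
exists (UI R), (fun p : S => (p.1 : UI R)); split.
- exact: UI_hausdorff.
- exact: UI_compact.
- exact: proj_cont.
- by move=> y; exists (y, Ordinal hn).
- move=> y; apply: (card_le_trans _ (card_image_le (fun i : 'I_n => ((y, i) : S)) setT)).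
  by apply: subset_card_le => -[a b] /= ay; exists b => //; rewrite ay.
Qed.

End Prem.


Section NotPrem.
Variables (R : realType) (n : nat).
Hypothesis hn : (1 < n)%N.
Local Notation S := (Sn R n).
Variables (M : pseudoMetricType R) (f : S -> M).
Hypothesis cf : continuous f.

Let h01 : 0 <= (0:R) <= 1. Proof. by rewrite lexx ler01. Qed.
Let p0 : unit_itv R := exist _ 0 h01.
Let pt (y : R) (i : 'I_n) : S := (insubd p0 y, i).
Let P y i := f (pt y i).
Let i0 : 'I_n := Ordinal (ltn_trans (ltn0Sn 0) hn).
Let i1 : 'I_n := Ordinal hn.

Let valpt y i : 0 <= y <= 1 -> val (pt y i).1 = y.
Proof. by move=> hy; rewrite /pt /= insubdK. Qed.

Lemma left_nbhd y e : 0 < y <= 1 -> 0 < e ->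
  exists2 z, z < y & forall w i, z < w < y -> ball (P y i0) e (P w i).
Proof.
move=> /andP[y0 y1] e0.
have hy : 0 <= y <= 1 by rewrite y1 ltW.
have : nbhs (pt y i0) (f @^-1` ball (f (pt y i0)) e).
  by apply: cf; exact: nbhsx_ballx.
move=> /nbhs_basic [B [+ Bs]]; rewrite /sn_basic valpt //=.
move=> [[ye _]|[z [/andP[z0 zy] Be]]]; first by move: y0; rewrite ye ltxx.
exists z => // w i /andP[zw wy]; apply: (Bs (pt w i)); rewrite Be; right.
by rewrite /= valpt ?zw ?wy //; apply/andP; split; [apply: ltW; exact: le_lt_trans zw | exact: ltW (lt_le_trans wy y1)].
Qed.

Lemma right_nbhd y e : 0 <= y < 1 -> 0 < e ->
  exists2 z, y < z & forall w i, y < w < z -> ball (P y i1) e (P w i).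
Proof.
move=> /andP[y0 y1] e0.
have hy : 0 <= y <= 1 by rewrite y0 ltW.
have : nbhs (pt y i1) (f @^-1` ball (f (pt y i1)) e).
  by apply: cf; exact: nbhsx_ballx.
move=> /nbhs_basic [B [+ Bs]]; rewrite /sn_basic valpt //=.
move=> [[ye _]|[z [/andP[yz z1] Be]]]; first by move: y1; rewrite ye ltxx.
exists z => // w i /andP[yw wz]; apply: (Bs (pt w i)); rewrite Be; right.
by rewrite /= valpt ?yw ?wz //; apply/andP; split; [apply: ltW; exact: le_lt_trans yw | exact: ltW (lt_le_trans wz z1)].
Qed.

Let E (e : R) := [set y : R | 0 < y < 1 /\ exists i j, ~ ball (P y i) e (P y j)].


Lemma E_isolated e : 0 < e -> E e `<=` isolated (E e).
Proof.
move=> e0 y Ey; have [/andP[y0 y1] _] := Ey.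
have e20 : 0 < e / 2 by rewrite divr_gt0.
have [z zy Hz] := left_nbhd (y := y) (ltac:(by rewrite y0 ltW)) e20.
have [z' yz Hz'] := right_nbhd (y := y) (ltac:(by rewrite y1 ltW)) e20.
have notE c w : (forall i, ball c (e / 2) (P w i)) -> ~ E e w.
  move=> hc [_ [i [j]]]; apply.
  have := ball_triangle (ball_sym (hc i)) (hc j).
  by rewrite -splitr.
split; first exact/mem_set.
exists `]z, z'[%classic.
  apply: open_nbhs_nbhs; split; first exact: itv_open.
  by rewrite /= in_itv /= zy yz.
apply/seteqP; split=> w; last by move=> ->; split=> //; rewrite /= in_itv /= zy yz.
rewrite /= in_itv /= => -[/andP[zw wz'] Ew] /=.
case: (ltgtP w y) => wy //.
- by exfalso; apply: (notE _ _ _ Ew) => i; apply: Hz; rewrite zw wy.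
- by exfalso; apply: (notE _ _ _ Ew) => i; apply: Hz'; rewrite wz' wy.
Qed.

Lemma E_countable e : 0 < e -> countable (E e).
Proof.
move=> e0; apply: (card_le_trans (subset_card_le (E_isolated e0))).
exact: countable_isolated.
Qed.

Lemma not_prem_aux : hausdorff_space M ->
  (forall y : M, (f @^-1` [set y] #<= [set: 'I_n.-1])%card) -> False.
Proof.
move=> hM fib.
pose Eall := \bigcup_(k in [set: nat]) E (k.+1%:R^-1).
have cE : countable Eall.
  apply: bigcup_countable; first exact: countableP.
  by move=> k _; apply: E_countable; rewrite invr_gt0.
have [y [y01 nEy]] : exists y, `]0, 1[%classic y /\ ~ Eall y.
  apply: contrapT => hno.
  have sub : `]0, 1[%classic `<=` Eall.
    by move=> y hy; apply: contrapT => ny; apply: hno; exists y.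
  have := countable_lebesgue_measure0 (card_le_trans (subset_card_le sub) cE).
  rewrite lebesgue_measure_itv /= lte_fin ltr01 oppr0 adde0 => /eqP; rewrite eqe oner_eq0.
  done.
have /andP[y0 y1] : 0 < y < 1 by move: y01; rewrite /= in_itv.
have hy : 0 <= y <= 1 by rewrite !ltW.
have eq_all i j : P y i = P y j.
  apply: (close_eq hM); rewrite ball_close => eps.
  pose k := Num.truncn (eps%:num^-1).
  have hk : k.+1%:R^-1 < eps%:num.
    rewrite -[ltRHS]invrK ltf_pV2 ?posrE ?invr_gt0 //; exact: truncnS_gt.
  have nE : ~ E (k.+1%:R^-1) y by move=> Ey; apply: nEy; exists k.
  apply: (le_ball (ltW hk)); apply: contrapT => nb; apply: nE.
  by split; [rewrite y0 y1 | exists i, j].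
have := fib (P y i0); move/card_leP => [g].
pose h (i : 'I_n) : 'I_n.-1 :=
  val (g (SigSub (mem_set (eq_all i i0 : (f @^-1` [set P y i0]) (pt y i))))).
have hinj : injective h.
  move=> i j /val_inj /(@injT _ _ g) /(congr1 val) /= /(congr1 snd) //.
have := leq_card h hinj; rewrite !card_ord.
move=> h2; have : (n.-1 < n)%N by rewrite ltn_predL (ltn_trans (ltn0Sn 0) hn).
by rewrite ltnNge h2.
Qed.

End NotPrem.

Lemma not_prem (R : realType) (n : nat) : (1 < n)%N -> ~ premetric_deg_le R (Sn R n) n.-1.
Proof.
by move=> hn [M [f [hM cM cf fs fib]]]; exact: (not_prem_aux hn cf hM fib).
Qed.


Lemma cont_prod (X : topologicalType) (I : eqType) (K : I -> topologicalType)
  (g : X -> prod_topology K) :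
  (forall i, continuous (fun x => g x i)) -> continuous g.
Proof.
move=> hg x; apply/cvg_sup => i.
have := @continuous_comp_initial _ X (K i) (fun f : (forall i, K i) => f i) g (hg i) x.
exact.
Qed.

Lemma inv_cont (K Y : topologicalType) (e : K -> Y) (e' : Y -> K) :
  compact [set: K] -> hausdorff_space Y -> continuous e ->
  (forall x, e' (e x) = x) -> {within range e, continuous e'}.
Proof.
move=> cK hY ce ee'.
apply/continuous_closedP => C cC.
apply/closed_subspaceP; exists (e @` C).
  apply: (compact_closed hY); apply: continuous_compact.
    exact: continuous_subspaceT.
  exact: (subclosed_compact cC cK).
apply/seteqP; split => y [Hy Ry].
  case: Hy => x Cx exy; split=> //.
  by rewrite /preimage /= /from_subspace -exy ee'.
case: Ry => x _ exy; split; last by exists x.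
by exists x => //; move: Hy; rewrite /preimage /= /from_subspace -exy ee'.
Qed.


Section Dyadic.
Variable R : realType.

Definition w (k : nat) : R := (2 ^+ k)^-1.
Definition bb (m : nat) : R := (m != 0%N)%:R.
Fixpoint tk (s : nat -> nat) (k : nat) : R :=
  if k is k'.+1 then tk s k' + bb (s k') * w k'.+1 else 0.

Lemma w_gt0 k : 0 < w k.
Proof. by rewrite /w invr_gt0 exprn_gt0. Qed.

Lemma wS k : w k.+1 + w k.+1 = w k.
Proof.
have h : (2 ^+ k : R) != 0 by rewrite expf_neq0 // pnatr_eq0.
rewrite /w exprS; field; exact: h.
Qed.

Lemma w0 : w 0 = 1.
Proof. by rewrite /w expr0 invr1. Qed.

Lemma w_le k k' : (k <= k')%N -> w k' <= w k.
Proof.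
move=> /subnK <-; elim: (k' - k)%N => [|m IH]; first by rewrite add0n.
rewrite addSn; apply: le_trans IH; have := wS (m + k); have := w_gt0 (m + k).+1; lra.
Qed.

Lemma w_small (e : R) : 0 < e -> exists k, w k < e.
Proof.
move=> e0; exists (Num.truncn e^-1).
have h1 := truncnS_gt e^-1.
have h2 : ((Num.truncn e^-1).+1%:R : R) <= 2 ^+ Num.truncn e^-1.
  rewrite -natrX ler_nat; exact: ltn_expl.
rewrite /w -[ltRHS]invrK ltf_pV2 ?posrE ?invr_gt0 ?exprn_gt0 //.
exact: lt_le_trans h1 h2.
Qed.

Lemma bb01 m : 0 <= bb m <= 1.
Proof. by rewrite /bb; case: (m != 0%N); rewrite /= ?lexx ?ler01. Qed.

Lemma tk_mono s k k' : (k <= k')%N -> tk s k <= tk s k'.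
Proof.
move=> /subnK <-; elim: (k' - k)%N => [|m IH]; first by rewrite add0n.
rewrite addSn /=; apply: le_trans IH _.
have /andP[b0 _] := bb01 (s (m + k)%N); have := w_gt0 (m + k).+1.
rewrite lerDl; move=> ?; exact: mulr_ge0 (ltW _).
Qed.

Lemma tk_tail s k m : tk s (m + k) + w (m + k) <= tk s k + w k.
Proof.
elim: m => [|m IH]; first by rewrite add0n.
rewrite addSn /=; apply: le_trans IH.
have /andP[b0 b1] := bb01 (s (m + k)%N); have := wS (m + k); have := w_gt0 (m + k).+1.
move=> wp ws; rewrite -ws.
have : bb (s (m + k)%N) * w (m + k).+1 <= w (m + k).+1.
  by rewrite ler_piMl // ltW.
lra.
Qed.

Lemma tk_bound s k k' : tk s k' <= tk s k + w k.
Proof.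
have [kk'|k'k] := leqP k k'.
  have := tk_tail s k (k' - k); rewrite subnK //; have := w_gt0 k'; lra.
have := tk_mono s (ltnW k'k); have := w_gt0 k; lra.
Qed.

Definition tsup (s : nat -> nat) : R := sup (range (tk s)).

Lemma tsup_hs s : has_sup (range (tk s)).
Proof.
split; first by exists 0, 0%N.
by exists 1 => _ [k _ <-]; have := tk_bound s 0 k; rewrite w0 /=; lra.
Qed.

Lemma tk_le_tsup s k : tk s k <= tsup s.
Proof. by apply: sup_upper_bound; [exact: tsup_hs | exists k]. Qed.

Lemma tsup_le s k : tsup s <= tk s k + w k.
Proof.
apply: ge_sup; first by exists 0, 0%N.
by move=> _ [m _ <-]; exact: tk_bound.
Qed.

Lemma tsup01 s : 0 <= tsup s <= 1.
Proof.
have := tk_le_tsup s 0; have := tsup_le s 0; rewrite w0 /= => h1 h2.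
by apply/andP; split; lra.
Qed.

Fixpoint gs (x : R) (k : nat) : R :=
  if k is k'.+1 then
    (if gs x k' + w k'.+1 <= x then gs x k' + w k'.+1 else gs x k')
  else 0.

Definition sg (x : R) (k : nat) : nat := if gs x k + w k.+1 <= x then 1%N else 0%N.

Lemma tk_sg x k : tk (sg x) k = gs x k.
Proof.
elim: k => [|k IH] //=; rewrite IH /sg /bb.
by case: ifP => _ /=; rewrite ?mul1r ?mul0r ?addr0.
Qed.

Lemma gs_inv x k : 0 <= x <= 1 -> gs x k <= x <= gs x k + w k.
Proof.
move=> /andP[x0 x1]; elim: k => [|k IH] /=; first by rewrite w0 add0r x0 x1.
move: IH => /andP[h1 h2]; have := wS k.
case: ifP => h3 ws; apply/andP; split; lra.
Qed.

Lemma tsup_sg x : 0 <= x <= 1 -> tsup (sg x) = x.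
Proof.
move=> hx; apply/eqP; rewrite eq_le; apply/andP; split.
  apply/ler_addgt0Pr => e e0; have [k hk] := w_small e0.
  have := tsup_le (sg x) k; rewrite tk_sg; have /andP[h1 h2] := gs_inv k hx; lra.
apply/ler_addgt0Pr => e e0; have [k hk] := w_small e0.
have := tk_le_tsup (sg x) k; rewrite tk_sg; have /andP[h1 h2] := gs_inv k hx; lra.
Qed.

End Dyadic.

Section FFsec.
Variables (R : realType) (n : nat).
Local Notation S := (Sn R n).

Definition FF (t : R) (p : S) : R :=
  if t < val p.1 then 1 else if val p.1 < t then 0 else (nat_of_ord p.2)%:R.

Lemma FF_cont t : continuous (FF t).
Proof.
apply: loc_const_cont => p.
have /andP[x0 x1] := valP p.1.
have [Hi|Hi] := boolP (1 < p.2)%N.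
  by exists [set p]; split; [rewrite /sn_basic Hi | move=> q ->].
have [Hi0|Hi0] := boolP (nat_of_ord p.2 == 0%N).
  have [xe|xn] := eqVneq (val p.1) 0.
    by exists [set p]; split; [rewrite /sn_basic (negbTE Hi) Hi0; left | move=> q ->].
  have xp : 0 < val p.1 by rewrite lt_neqAle eq_sym xn x0.
  have [tx|xt] := ltP t (val p.1).
    exists ([set p] `|` [set q | Num.max 0 t < val q.1 < val p.1]); split.
      rewrite /sn_basic (negbTE Hi) Hi0; right; exists (Num.max 0 t); split=> //.
      by rewrite le_max lexx /= gt_max xp tx.
    move=> q [->//|/andP[]]; rewrite gt_max => /andP[_ ty] _.
    by rewrite /FF ty tx.
  exists ([set p] `|` [set q | 0 < val q.1 < val p.1]); split.
    rewrite /sn_basic (negbTE Hi) Hi0; right; exists 0; split=> //.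
    by rewrite lexx xp.
  move=> q [->//|/andP[_ yx]].
  have yt : val q.1 < t := lt_le_trans yx xt.
  rewrite /FF yt ltNge (ltW yt) /= ltNge xt /=.
  by case: ifP => // _; move/eqP: Hi0 => ->.
have [xe|xn] := eqVneq (val p.1) 1.
  by exists [set p]; split; [rewrite /sn_basic (negbTE Hi) (negbTE Hi0); left | move=> q ->].
have xp : val p.1 < 1 by rewrite lt_neqAle xn x1.
have Hi1 : nat_of_ord p.2 = 1%N.
  by move: Hi Hi0; case: (nat_of_ord p.2) => [|[|]].
have [xt|tx] := ltP (val p.1) t.
  exists ([set p] `|` [set q | val p.1 < val q.1 < Num.min 1 t]); split.
    rewrite /sn_basic (negbTE Hi) (negbTE Hi0); right; exists (Num.min 1 t); split=> //.
    by rewrite ge_min lexx /= lt_min xp xt.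
  move=> q [->//|/andP[xy]]; rewrite lt_min => /andP[_ yt].
  by rewrite /FF yt ltNge (ltW yt) /= ltNge (ltW xt) xt.
exists ([set p] `|` [set q | val p.1 < val q.1 < 1]); split.
  rewrite /sn_basic (negbTE Hi) (negbTE Hi0); right; exists 1; split=> //.
  by rewrite lexx xp.
move=> q [->//|/andP[xy _]].
have ty : t < val q.1 := le_lt_trans tx xy.
rewrite /FF ty; case: ifP => // _; rewrite ltNge tx /= Hi1 //.
Qed.

End FFsec.

Section Baire.
Variable R : realType.

Lemma nbhs_prefix (s : baire_space) k :
  nbhs s [set t : baire_space | forall j, (j < k)%N -> t j = s j].
Proof.
elim: k => [|k IH].
  have : nbhs s [set: baire_space] by exact: filterT.
  by apply: filterS => t _ j.
have hk : nbhs s [set t : baire_space | t k = s k].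
  have := @proj_continuous nat (fun _ : nat => nat) k s.
  move=> /(_ [set s k]); apply; by [].
apply: (filterS _ (filterI IH hk)) => t [h1 h2] j; rewrite ltnS leq_eqVlt.
by case/orP => [/eqP ->|/h1].
Qed.

Lemma tk_prefix (s t : nat -> nat) k :
  (forall j, (j < k)%N -> t j = s j) -> tk R t k = tk R s k.
Proof.
elim: k => [//|k IH] h /=; rewrite IH ?h //.
by move=> j jk; apply: h; exact: ltnW.
Qed.

End Baire.

Section Embed.
Variables (R : realType) (n : nat).
Local Notation S := (Sn R n).

Definition Hk k (s : R) (p : S) : R :=
  if s + w R k < val p.1 then 1 else if val p.1 < s then 0 else (nat_of_ord p.2)%:R.

Definition emb (p : S) : ptws_fun R := fun s : baire_space => FF (tsup R s) p.

Lemma emb_baire p : baire_one R (emb p).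
Proof.
exists (fun k (s : baire_space) => Hk k (tk R s k) p); split.
  move=> k s V /= hV; apply: (filterS _ (nbhs_prefix s k)) => t ht.
  by rewrite /= (tk_prefix _ ht); exact: nbhs_singleton.
move=> s; apply: cvg_near_cst.
have h1 k := @tk_le_tsup R s k; have h2 k := @tsup_le R s k.
rewrite /emb /FF /Hk.
case: (ltgtP (tsup R s) (val p.1)) => tx.
- have [k0 hk0] := w_small (ltac:(by rewrite subr_gt0) : 0 < val p.1 - tsup R s).
  exists k0 => // k /= hk; move: hk0 tx => /= hk0 tx; have := w_le R hk; have := h1 k.
  by move=> a b; case: ifP => // /negP []; lra.
- have [k0 hk0] := w_small (ltac:(by rewrite subr_gt0) : 0 < tsup R s - val p.1).
  exists k0 => // k /= hk; move: hk0 tx => /= hk0 tx; have := w_le R hk; have := h2 k.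
  move=> a b; case: ifP => [h|_]; first lra.
  by case: ifP => // /negP []; lra.
- exists 0%N => // k /= _; move: tx => /= tx; have := h1 k; have := h2 k.
  move=> a b; case: ifP => [h|_]; first lra.
  by case: ifP => // h; lra.
Qed.

End Embed.


Lemma emb_inj (R : realType) (n : nat) : injective (@emb R n).
Proof.
move=> p q h.
have hs s : FF (tsup R s) p = FF (tsup R s) q by move: (congr1 (fun f => f s) h).
have /andP[x0 x1] := valP p.1; have /andP[y0 y1] := valP q.1.
case: (ltgtP (val p.1) (val q.1)) => xy.
- have hm : 0 <= (val p.1 + val q.1) / 2 <= 1 by apply/andP; split; lra.
  have := hs (sg ((val p.1 + val q.1) / 2)); rewrite (tsup_sg hm) /FF.
  have -> : ((val p.1 + val q.1) / 2 < val p.1) = false by apply/negbTE; rewrite -leNgt; lra.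
  have -> : (val p.1 < (val p.1 + val q.1) / 2) by lra.
  have -> : ((val p.1 + val q.1) / 2 < val q.1) by lra.
  by move=> /eqP; rewrite eq_sym oner_eq0.
- have hm : 0 <= (val p.1 + val q.1) / 2 <= 1 by apply/andP; split; lra.
  have := hs (sg ((val p.1 + val q.1) / 2)); rewrite (tsup_sg hm) /FF.
  have -> : ((val p.1 + val q.1) / 2 < val q.1) = false by apply/negbTE; rewrite -leNgt; lra.
  have -> : (val q.1 < (val p.1 + val q.1) / 2) by lra.
  have -> : ((val p.1 + val q.1) / 2 < val p.1) by lra.
  by move=> /eqP; rewrite oner_eq0.
- have hx : 0 <= val p.1 <= 1 by rewrite x0 x1.
  have := hs (sg (val p.1)); rewrite (tsup_sg hx) /FF -xy ltxx => /eqP; rewrite eqr_nat => /eqP h2.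
  move: p q xy h2 {h hs x0 x1 y0 y1 hx} => [a b] [c d] /= ac bd.
  by congr pair; apply: val_inj.
Qed.

Lemma rosenthal (R : realType) (n : nat) : (1 < n)%N -> rosenthal_compactum R (Sn R n).
Proof.
move=> hn.
have h01 : 0 <= (0:R) <= 1 by rewrite lexx ler01.
pose p0 : Sn R n := (exist _ 0 h01, Ordinal hn).
pose e' (f : ptws_fun R) : Sn R n := xget p0 [set p | emb p = f].
have ce : continuous (@emb R n).
  by apply: cont_prod => s; exact: FF_cont.
have ee' x : e' (emb x) = x.
  rewrite /e'; have := @xgetPex _ p0 [set p | emb p = emb x] (ex_intro _ x erefl).
  by move=> /emb_inj.
exists (@emb R n), e'; split => //.
- apply: inv_cont => //; first exact: Sn_compact.
  have := @hausdorff_product baire_space (fun _ => (R : topologicalType)) (fun _ => @Rhausdorff R).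
  exact.
- apply: continuous_compact; last exact: Sn_compact.
  exact: continuous_subspaceT.
- by move=> _ [p _ <-]; exact: emb_baire.
Qed.


Theorem mainTheorem6 (R : realType) (n : nat) : (2 <= n)%N ->
  [/\ rosenthal_compactum R (Sn R n),
      premetric_deg_le R (Sn R n) n &
      ~ premetric_deg_le R (Sn R n) n.-1].
Proof.
move=> hn; split; [exact: rosenthal hn | exact: prem_n hn | exact: not_prem hn].
Qed.
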